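(* For the $A_r$ $Q$-system with initial data $R_{\alpha,r-\alpha}=R_{\alpha,r-\alpha+1}=1$ for all $\alpha\in I_r$, $$\sum_{n\ge0}R_{1,n+r-1}\,t^n=1+t\,\frac{V_r(t)}{V_{r+1}(t)},\qquad V_m(t)=(-1)^m\,U_{2m}(\sqrt t),$$ where $U_m$ is the Chebyshev polynomial of the second kind, $U_m(2\cos\theta)=\frac{\sin(m+1)\theta}{\sin\theta}$ (each $V_m$ is a polynomial in $t$). For example, for $r=2$ the right side is $1+t\frac{1-3t+t^2}{1-6t+5t^2-t^3}$.
   Context: For $r\ge1$, $I_r=\{1,\dots,r\}$, the $A_r$ $Q$-system is the family $(R_{\alpha,n})_{0\le\alpha\le r+1,n\in\mathbb Z}$ with $R_{0,n}=R_{r+1,n}=1$ and $R_{\alpha,n+1}R_{\alpha,n-1}=R_{\alpha,n}^2+R_{\alpha+1,n}R_{\alpha-1,n}$ for $\alpha\in I_r$, $n\in\mathbb Z$; it is uniquely determined by the values $R_{\alpha,m_\alpha},R_{\alpha,m_\alpha+1}$ ($\alpha\in I_r$) for any $(m_1,\dots,m_r)\in\mathbb Z^r$ with $|m_{\alpha+1}-m_\alpha|\le1$. Here $m_\alpha=r-\alpha$. *)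

(* Defs.v *)
From HB Require Import structures.
From mathcomp Require Import all_boot all_order all_algebra.
Set Implicit Arguments. Unset Strict Implicit. Unset Printing Implicit Defensive.
Import Order.TTheory GRing.Theory Num.Theory.
Local Open Scope ring_scope.

(* Chebyshev polynomials of the second kind, normalised so that
   U_m(2 cos th) = sin((m+1) th) / sin th :
   U_0 = 1, U_1 = X, U_{m+1} = X U_m - U_{m-1}. *)
Fixpoint chebU_pair (m : nat) : {poly rat} * {poly rat} :=
  match m with
  | 0 => (1, 'X)
  | m'.+1 => let (a, b) := chebU_pair m' in (b, 'X * b - a)
  end.

Definition chebU (m : nat) : {poly rat} := (chebU_pair m).1.

(* V_m(t) = (-1)^m U_{2m}(sqrt t).  Since U_{2m} is an even polynomial,
   U_{2m}(sqrt t) = sum_k (U_{2m})_{2k} t^k, which has degree m. *)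
Definition chebV (m : nat) : {poly rat} :=
  \poly_(k < m.+1) ((-1) ^+ m * (chebU (2 * m))`_(2 * k)).

Definition is_Qsystem_A (r : nat) (R : nat -> int -> rat) : Prop :=
  (forall n : int, R 0%N n = 1) /\
  (forall n : int, R r.+1 n = 1) /\
  (forall (a : nat) (n : int), (1 <= a <= r)%N ->
     R a (n + 1) * R a (n - 1) = R a n ^+ 2 + R a.+1 n * R a.-1 n).

(* Main.v *)
Require Import Defs.
From HB Require Import structures.
From mathcomp Require Import all_boot all_order all_algebra all_fingroup.
From Stdlib Require Import Lia.
Import Order.TTheory GRing.Theory Num.Theory.
Local Open Scope ring_scope.
Set Implicit Arguments. Unset Strict Implicit. Unset Printing Implicit Defensive.

Definition mat {T : Type} n (F : nat -> nat -> T) : 'M[T]_n := \matrix_(i, j) F i j.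

Lemma mat_eq {T : Type} n (F G : nat -> nat -> T) :
  (forall i j, i < n -> j < n -> F i j = G i j)%N -> mat n F = mat n G.
Proof. by move=> H; apply/matrixP=> i j; rewrite !mxE H. Qed.

Lemma mat_minor {T : Type} n (F : nat -> nat -> T) (i0 j0 : 'I_n.+1) :
  row' i0 (col' j0 (mat n.+1 F)) = mat n (fun i j => F (bump i0 i) (bump j0 j)).
Proof. by apply/matrixP=> i j; rewrite !mxE. Qed.

Section LA.
Variable R : fieldType.

Lemma schur m n (A : 'M[R]_m) U W (D : 'M[R]_n) : D \in unitmx ->
  \det (block_mx A U W D) = \det D * \det (A - U *m invmx D *m W).
Proof.
move=> uD.
have -> : block_mx A U W D = block_mx 1%:M (U *m invmx D) 0 1%:M *m
                             block_mx (A - U *m invmx D *m W) 0 W D.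
  rewrite mulmx_block !mul1mx !mul0mx ?mulmx0 ?add0r ?addr0.
  by rewrite -[U *m invmx D *m D]mulmxA mulVmx // mulmx1 subrK.
by rewrite det_mulmx det_ublock det_lblock !det1 !mul1r mulrC.
Qed.

Lemma mat_block m n (G : nat -> nat -> R) :
  mat (m + n) G = block_mx (mat m G) (\matrix_(i < m, j < n) G i (m + j)%N)
                           (\matrix_(i < n, j < m) G (m + i)%N j)
                           (mat n (fun i j => G (m + i)%N (m + j)%N)).
Proof.
apply/matrixP=> i j.
rewrite -(splitK i) -(splitK j).
case: (split i) => i'; case: (split j) => j';
  rewrite ?block_mxEul ?block_mxEur ?block_mxEdl ?block_mxEdr !mxE //.
Qed.

Lemma det_mx2 (S : 'M[R]_2) : \det S = S ord0 ord0 * S ord_max ord_max - S ord0 ord_max * S ord_max ord0.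
Proof.
rewrite (expand_det_row _ 0) !big_ord_recl big_ord0 addr0 /cofactor !det_mx11 !mxE /=.
rewrite !expr0 !mul1r expr1 mulN1r mulrN; congr (_ * _ - _ * _); congr (S _ _); exact/val_inj.
Qed.


Lemma det_simperm n (s : 'S_n) (A : 'M[R]_n) :
  \det (\matrix_(i, j) A (s i) (s j)) = \det A.
Proof.
have -> : \matrix_(i, j) A (s i) (s j) = row_perm s (col_perm s A).
  by apply/matrixP=> i j; rewrite !mxE.
rewrite row_permE col_permE !det_mulmx !det_perm odd_permV mulrCA mulrA.
by rewrite -mulrA -expr2 sqrr_sign mulr1.
Qed.

Lemma det_rowperm n (s : 'S_n) (A : 'M[R]_n) :
  \det (\matrix_(i, j) A (s i) j) = (-1) ^+ s * \det A.
Proof.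
have -> : \matrix_(i, j) A (s i) j = row_perm s A by apply/matrixP=> i j; rewrite !mxE.
by rewrite row_permE det_mulmx det_perm.
Qed.

Lemma det_colperm n (s : 'S_n) (A : 'M[R]_n) :
  \det (\matrix_(i, j) A i (s j)) = (-1) ^+ s * \det A.
Proof.
have -> : \matrix_(i, j) A i (s j) = col_perm s A by apply/matrixP=> i j; rewrite !mxE.
by rewrite col_permE det_mulmx det_perm odd_permV mulrC.
Qed.

Lemma ring4 (d a b c e : R) : d * (a * e - b * c) * d = d * e * (d * a) - d * c * (d * b).
Proof.
have h : forall x y : R, d * (x * y) * d = d * y * (d * x).
  by move=> x y; rewrite mulrAC mulrACA mulrC.
by rewrite mulrBr mulrBl !h.
Qed.

Definition ep (p i : nat) := if i == 0%N then p else i.+1.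

Lemma minor1 n (G : nat -> nat -> R) (p q : 'I_2) : \det (mat n (fun i j => G i.+2 j.+2)) != 0 ->
  \det (mat n.+1 (fun i j => G (ep p i) (ep q j))) =
  \det (mat n (fun i j => G i.+2 j.+2)) *
  (G p q - ((\matrix_(i < 2, j < n) G i (2 + j)%N) *m
            invmx (mat n (fun i j => G i.+2 j.+2)) *m
            (\matrix_(i < n, j < 2) G (2 + i)%N j)) p q).
Proof.
move=> nz.
rewrite -[n.+1]/(1 + n)%N (mat_block 1 n) schur; last by rewrite unitmxE unitfE.
have -> : mat n (fun i j => G (ep p (1 + i)) (ep q (1 + j))) = mat n (fun i j => G i.+2 j.+2).
  by apply: mat_eq => i j _ _; rewrite /ep !add1n.
rewrite det_mx11 !mxE.
congr (_ * (_ - _)).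
apply: eq_bigr => k _; rewrite !mxE; congr (_ * _).
  by apply: eq_bigr => l _; rewrite !mxE /ep !add1n add2n.
Qed.

Lemma dj_core n (G : nat -> nat -> R) : \det (mat n (fun i j => G i.+2 j.+2)) != 0 ->
  \det (mat n.+2 G) * \det (mat n (fun i j => G i.+2 j.+2)) =
  \det (mat n.+1 (fun i j => G i.+1 j.+1)) * \det (mat n.+1 (fun i j => G (ep 0 i) (ep 0 j)))
  - \det (mat n.+1 (fun i j => G i.+1 (ep 0 j))) * \det (mat n.+1 (fun i j => G (ep 0 i) j.+1)).
Proof.
move=> nz.
have e1 : forall i, ep 1 i = i.+1 by case.
have -> : mat n.+1 (fun i j => G i.+1 j.+1) = mat n.+1 (fun i j => G (ep (@ord_max 1) i) (ep (@ord_max 1) j)).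
  by apply: mat_eq => i j _ _; rewrite /= !e1.
have -> : mat n.+1 (fun i j => G i.+1 (ep 0 j)) = mat n.+1 (fun i j => G (ep (@ord_max 1) i) (ep (@ord0 1) j)).
  by apply: mat_eq => i j _ _; rewrite /= !e1.
have -> : mat n.+1 (fun i j => G (ep 0 i) j.+1) = mat n.+1 (fun i j => G (ep (@ord0 1) i) (ep (@ord_max 1) j)).
  by apply: mat_eq => i j _ _; rewrite /= !e1.
have -> : mat n.+1 (fun i j => G (ep 0 i) (ep 0 j)) = mat n.+1 (fun i j => G (ep (@ord0 1) i) (ep (@ord0 1) j)).
  by [].
rewrite !minor1 //.
rewrite -[n.+2]/(2 + n)%N (mat_block 2 n).
have -> : mat n (fun i j => G (2 + i)%N (2 + j)%N) = mat n (fun i j => G i.+2 j.+2) by [].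
rewrite schur; last by rewrite unitmxE unitfE.
rewrite det_mx2.
set d := \det _.
set X := (_ *m _ *m _).
rewrite !mxE /=.
exact: ring4.
Qed.


Lemma ord_pred_val n (i : 'I_n.+1) :
  val (ord_pred i) = if val i == 0%N then n else (val i).-1.
Proof.
case: i => [[|k] lt] /=; first by rewrite modn_small.
by rewrite modnDr modn_small // ltnW.
Qed.

Definition cyc n : 'S_n.+1 := perm (@ord_pred_inj n.+1).
Definition pi2 n : 'S_n.+2 := lift_perm ord0 ord0 (cyc n).
Definition gN n k := if k == 0%N then 0%N else if k == 1%N then n.+1 else k.-1.

Lemma cyc_val n (i : 'I_n.+1) : val (cyc n i) = if val i == 0%N then n else (val i).-1.
Proof. by rewrite /cyc permE ord_pred_val. Qed.

Lemma pi2_val n (i : 'I_n.+2) : val (pi2 n i) = gN n i.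
Proof.
case: (unliftP ord0 i) => [k|] ->; rewrite /pi2 ?lift_perm_id ?lift_perm_lift //=.
rewrite /bump !add1n cyc_val /gN /=; by case: k => [[|k] ?].
Qed.

Lemma DJ n (F : nat -> nat -> R) : \det (mat n (fun i j => F i.+1 j.+1)) != 0 ->
  \det (mat n.+2 F) * \det (mat n (fun i j => F i.+1 j.+1)) =
  \det (mat n.+1 (fun i j => F i.+1 j.+1)) * \det (mat n.+1 F)
  - \det (mat n.+1 (fun i j => F i.+1 j)) * \det (mat n.+1 (fun i j => F i j.+1)).
Proof.
move=> nz; pose G (i j : nat) := F (gN n i) (gN n j).
have h1 : mat n (fun i j => G i.+2 j.+2) = mat n (fun i j => F i.+1 j.+1) by [].
have := @dj_core n G; rewrite h1 => /(_ nz).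
have -> : mat n.+2 G = \matrix_(i, j) (mat n.+2 F) (pi2 n i) (pi2 n j).
  by apply/matrixP=> i j; rewrite !mxE !pi2_val.
have gS : forall i : 'I_n.+1, gN n i.+1 = (cyc n i).+1.
  by move=> i; rewrite cyc_val /gN; case: i => [[|i] ?].
have g0 : forall i, gN n (ep 0 i) = i by case.
have -> : mat n.+1 (fun i j => G i.+1 j.+1) =
          \matrix_(i, j) (mat n.+1 (fun i j => F i.+1 j.+1)) (cyc n i) (cyc n j).
  by apply/matrixP=> i j; rewrite !mxE /G !gS.
have -> : mat n.+1 (fun i j => G (ep 0 i) (ep 0 j)) = mat n.+1 F.
  by apply/matrixP=> i j; rewrite !mxE /G !g0.
have -> : mat n.+1 (fun i j => G i.+1 (ep 0 j)) =
          \matrix_(i, j) (mat n.+1 (fun i j => F i.+1 j)) (cyc n i) j.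
  by apply/matrixP=> i j; rewrite !mxE /G !gS !g0.
have -> : mat n.+1 (fun i j => G (ep 0 i) j.+1) =
          \matrix_(i, j) (mat n.+1 (fun i j => F i j.+1)) i (cyc n j).
  by apply/matrixP=> i j; rewrite !mxE /G !gS !g0.
rewrite !det_simperm det_rowperm det_colperm => ->.
by rewrite mulrACA -expr2 sqrr_sign mul1r.
Qed.

End LA.

Lemma bumpL h i : (i < h)%N -> bump h i = i.
Proof. by move=> H; rewrite /bump leqNgt H. Qed.
Lemma bumpR h i : (h <= i)%N -> bump h i = i.+1.
Proof. by move=> H; rewrite /bump H add1n. Qed.

Section Tri.
Variable R : comRingType.
Variables d0 d : R.

Definition tr (i j : nat) : R :=
  if i == j then (if i == 0%N then d0 else d)
  else if (i.+1 == j) || (j.+1 == i) then 1 else 0.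

Definition trid m : 'M[R]_m := mat m tr.

Lemma sign_odd_self m : (-1) ^+ (m + m)%N = 1 :> R.
Proof. by rewrite -signr_odd oddD addbb expr0. Qed.

Lemma sign_odd_S m : (-1) ^+ (m.+1 + m)%N = -1 :> R.
Proof. by rewrite -signr_odd oddD /= addNb addbb expr1. Qed.

Lemma tr_diagS k : tr k.+1 k.+1 = d. Proof. by rewrite /tr eqxx. Qed.
Lemma tr_sup k : tr k k.+1 = 1. Proof. by rewrite /tr (ltn_eqF (ltnSn k)) eqxx. Qed.
Lemma tr_sub k : tr k.+1 k = 1. Proof. by rewrite /tr (gtn_eqF (ltnSn k)) eqxx orbT. Qed.
Lemma tr_far i j : (i.+1 < j)%N -> tr i j = 0 /\ tr j i = 0.
Proof.
move=> h; have h1 : (i < j)%N := ltnW h.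
rewrite /tr (ltn_eqF h1) (gtn_eqF h1) (ltn_eqF h).
by rewrite (gtn_eqF (leqW h1)) orbF.
Qed.

Lemma trid_rec m : \det (trid m.+2) = d * \det (trid m.+1) - \det (trid m).
Proof.
rewrite /trid (expand_det_row _ ord_max) !big_ord_recr /=.
rewrite big1 ?add0r; last first.
  move=> j _; rewrite !mxE.
  have jm : (j < m)%N := ltn_ord j.
  by rewrite (tr_far (_ : j.+1 < m.+1)%N).2 ?mul0r.
rewrite !mxE /= tr_sub tr_diagS mul1r addrC; congr (_ + _).
  rewrite /cofactor mat_minor /= sign_odd_self mul1r; congr (_ * \det _).
  by apply: mat_eq => i j im jm; rewrite /bump !(leqNgt m.+1) im jm /= !add0n.
rewrite /cofactor mat_minor /= sign_odd_S mulN1r; congr (- _).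
rewrite (expand_det_col _ ord_max) big_ord_recr /= big1 ?add0r; last first.
  move=> i _; rewrite !mxE.
  have im : (i < m)%N := ltn_ord i.
  rewrite bumpL ?bumpR //=; last exact: leqW.
  by rewrite (tr_far (_ : i.+1 < m.+1)%N).1 ?mul0r.
rewrite !mxE /= bumpL // bumpR // tr_sup mul1r.
rewrite /cofactor mat_minor /= sign_odd_self mul1r; congr (\det _).
apply: mat_eq => i j im jm; rewrite !(bumpL im) !(bumpL jm) bumpL ?bumpL //.
exact: leqW.
Qed.

End Tri.

Lemma chebU0 : chebU 0 = 1. Proof. by []. Qed.
Lemma chebU1 : chebU 1 = 'X. Proof. by []. Qed.
Lemma chebU_SS m : chebU m.+2 = 'X * chebU m.+1 - chebU m.
Proof. by rewrite /chebU /=; case: (chebU_pair m). Qed.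

Lemma size_chebU m : (size (chebU m) <= m.+1)%N.
Proof.
elim: m {-2}m (leqnn m) => [|n IH] m hm.
  by move: hm; rewrite leqn0 => /eqP ->; rewrite chebU0 size_poly1.
case: m hm => [|[|m]] hm; first by rewrite chebU0 size_poly1.
  by rewrite chebU1 size_polyX.
rewrite chebU_SS (leq_trans (size_polyD _ _)) // geq_max.
rewrite (leq_trans (size_polyMleq _ _)) ?size_polyX //=; last first.
  by rewrite add1n ltnS IH // -ltnS ltnW.
by rewrite size_polyN (leq_trans (IH _ _)) // -ltnS ltnW // ltnW.
Qed.

Lemma chebU_coef_big m k : (m < k)%N -> (chebU m)`_k = 0.
Proof. by move=> h; rewrite nth_default // (leq_trans (size_chebU m)). Qed.

Lemma chebU_4 m : chebU (2 * m.+2) = ('X * 'X - 2%:R) * chebU (2 * m.+1) - chebU (2 * m).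
Proof.
have e1 : (2 * m.+2 = (2 * m).+4)%N by rewrite !mulnS !add2n.
have e2 : (2 * m.+1 = (2 * m).+2)%N by rewrite !mulnS add2n.
rewrite e1 e2 chebU_SS chebU_SS.
have h : 'X * chebU (2 * m).+1 = chebU (2 * m).+2 + chebU (2 * m).
  by rewrite chebU_SS subrK.
rewrite mulrBr mulrA h mulrBl opprD addrA mulr_natl.
by rewrite mulr2n opprD addrA [LHS]addrAC.
Qed.

Definition chebE m : {poly rat} := \poly_(k < m.+1) (chebU (2 * m))`_(2 * k).

Lemma coef_E m k : (chebE m)`_k = (chebU (2 * m))`_(2 * k).
Proof.
rewrite coef_poly; case: ltnP => // h.
by rewrite chebU_coef_big // ltn_pmul2l.
Qed.

Lemma chebV_E m : chebV m = (-1) ^+ m *: chebE m.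
Proof.
apply/polyP=> k; rewrite coefZ coef_E /chebV coef_poly; case: ltnP => // h.
by rewrite chebU_coef_big ?mulr0 // ltn_pmul2l.
Qed.

Lemma chebE_SS m : chebE m.+2 = ('X - 2%:R) * chebE m.+1 - chebE m.
Proof.
apply/polyP=> k.
rewrite coef_E chebU_4 coefB mulrBl coefB -mulrA coefXM coefXM mulr_natl coefMn.
rewrite coefB mulrBl coefB coefXM mulr_natl coefMn !coef_E.
case: k => [|k]; first by [].
by rewrite !mulnS !add2n.
Qed.

Lemma chebV_SS m : chebV m.+2 = (2%:R - 'X) * chebV m.+1 - chebV m.
Proof.
rewrite !chebV_E chebE_SS !exprS !mulN1r opprK scalerBr.
congr (_ - _); by rewrite scaleNr mulrN -mulNr opprB scalerAr.
Qed.

Lemma chebV0 : chebV 0 = 1.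
Proof.
apply/polyP=> k; rewrite /chebV coef_poly coef1 muln0 chebU0 coef1.
by case: k => [|k] //=; rewrite expr0 mul1r.
Qed.

Lemma chebV1 : chebV 1 = 1 - 'X.
Proof.
have h : chebU 2 = 'X * 'X - 1 by rewrite chebU_SS.
apply/polyP=> k; rewrite /chebV coef_poly muln1 h !coefB !coef1 coefXM !coefX expr1 mulN1r.
case: k => [|[|k]] /=.
- by rewrite !subr0 sub0r opprK.
- by rewrite !subr0 sub0r.
- by rewrite subr0.
Qed.

Lemma det_trid_V m : \det (trid (1 - 'X) (2%:R - 'X) m) = chebV m.
Proof.
suff : \det (trid (1 - 'X) (2%:R - 'X) m) = chebV m /\
       \det (trid (1 - 'X) (2%:R - 'X) m.+1) = chebV m.+1 by case.
elim: m => [|m [IH1 IH2]].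
  by rewrite det_mx00 chebV0 det_mx11 /trid mxE chebV1.
by split => //; rewrite trid_rec chebV_SS IH1 IH2.
Qed.

Lemma det_trid_rat m : \det (trid (1 : rat) 2%:R m) = 1.
Proof.
suff : \det (trid (1 : rat) 2%:R m) = 1 /\ \det (trid (1 : rat) 2%:R m.+1) = 1 by case.
elim: m => [|m [IH1 IH2]].
  by rewrite det_mx00 det_mx11 /trid mxE.
split => //; rewrite trid_rec IH1 IH2 mulr1.
by rewrite mulr2n addrK.
Qed.

Section Bmat.
Variable r : nat.

Definition tq := tr (1 : rat) 2%:R.
Definition Bm : 'M[rat]_r.+1 := trid (1 : rat) 2%:R r.+1.

Lemma Bm_entry i j : Bm i j = tq i j.
Proof. by rewrite /Bm /trid mxE. Qed.

Lemma tq_far i j : (i.+1 < j)%N -> tq i j = 0 /\ tq j i = 0.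
Proof. exact: tr_far. Qed.
Lemma tq_sup k : tq k k.+1 = 1. Proof. exact: tr_sup. Qed.

Lemma tq_sym i j : tq i j = tq j i.
Proof. by rewrite /tq /tr eq_sym orbC; case: eqP => // ->. Qed.

Lemma Bm_tr : Bm^T = Bm.
Proof. by apply/matrixP=> i j; rewrite mxE !Bm_entry tq_sym. Qed.

Lemma Bpow_tr k : (Bm ^+ k)^T = Bm ^+ k.
Proof.
elim: k => [|k IH]; first by rewrite !expr0 trmx1.
by rewrite exprS -mulmxE trmx_mul IH Bm_tr mulmxE -exprS exprSr.
Qed.

Lemma Bpow_sym k (i j : 'I_r.+1) : (Bm ^+ k) i j = (Bm ^+ k) j i.
Proof. by rewrite -{1}Bpow_tr mxE. Qed.

Lemma Bpow_tri i : (forall l : 'I_r.+1, (i < l)%N -> (Bm ^+ i) ord0 l = 0) /\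
                   (forall l : 'I_r.+1, val l = i -> (Bm ^+ i) ord0 l = 1).
Proof.
elim: i => [|i [IH1 IH2]].
  split=> l; rewrite expr0 mxE.
    by move=> h; case: eqP => // e; rewrite -e in h.
  by move=> h; rewrite (_ : ord0 == l) //; apply/eqP/val_inj; rewrite h.
split=> l hl; rewrite exprSr -mulmxE mxE.
  rewrite big1 // => m _.
  have [hm|hm] := ltnP i m; first by rewrite IH1 ?mul0r.
  rewrite Bm_entry (tq_far (_ : m.+1 < l)%N).1 ?mulr0 //.
  by rewrite (leq_ltn_trans _ hl).
have ir : (i < r.+1)%N by rewrite (ltn_trans (ltnSn i)) // -hl ltn_ord.
rewrite (bigD1 (Ordinal ir)) //= IH2 // Bm_entry hl tq_sup mul1r big1 ?addr0 //.
move=> m hm.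
have [him|him] := ltnP i m; first by rewrite IH1 ?mul0r.
have hm' : (m < i)%N.
  by rewrite ltn_neqAle him andbT; apply: contra hm => /eqP e; apply/eqP/val_inj.
by rewrite Bm_entry hl (tq_far (_ : m.+1 < i.+1)%N).1 ?mulr0.
Qed.


Definition hk b s : 'M[rat]_b := mat b (fun i j => (Bm ^+ (s + i + j)) ord0 ord0).
Definition H b s := \det (hk b s).
Definition lead b (M : 'M[rat]_r.+1) : 'M[rat]_b := mat b (fun i j => M (inord i) (inord j)).

Lemma sum_trunc b (F : 'I_r.+1 -> rat) : (b <= r.+1)%N ->
  (forall l : 'I_r.+1, (b <= l)%N -> F l = 0) ->
  \sum_(l < r.+1) F l = \sum_(l < b) F (inord l).
Proof.
move=> hb hz.
rewrite (big_ord_widen _ (fun l => F (inord l)) hb) [RHS]big_mkcond /=.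
apply: eq_bigr => l _; rewrite inord_val; case: ltnP => // h; by rewrite hz.
Qed.

Lemma H_lead b s : (b <= r.+1)%N -> H b s = \det (lead b (Bm ^+ s)).
Proof.
move=> hb.
pose Y := mat b (fun i l => (Bm ^+ i) ord0 (inord l)).
have vi : forall l, (l < b)%N -> ((inord l : 'I_r.+1) : nat) = l.
  by move=> l hl; rewrite inordK // (leq_trans hl).
rewrite /H.
have -> : hk b s = Y *m lead b (Bm ^+ s) *m Y^T.
  apply/matrixP=> i j; rewrite !mxE.
  have -> : (s + i + j = i + s + j)%N by rewrite (addnC s).
  rewrite !exprD -!mulmxE mxE.
  rewrite (sum_trunc hb); last first.
    move=> m hm; rewrite mxE (sum_trunc hb); last first.
      move=> l hl; rewrite (Bpow_tri i).1 ?mul0r //.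
      by rewrite (leq_trans (ltn_ord i)).
    rewrite Bpow_sym (Bpow_tri j).1 ?mulr0 //.
    by rewrite (leq_trans (ltn_ord j)).
  apply: eq_bigr => m _; rewrite !mxE Bpow_sym; congr (_ * _).
  rewrite (sum_trunc hb); last first.
    move=> l hl; rewrite (Bpow_tri i).1 ?mul0r //.
    by rewrite (leq_trans (ltn_ord i)).
  by apply: eq_bigr => l _; rewrite !mxE.
have dY : \det Y = 1.
  rewrite det_trig; last first.
    apply/is_trig_mxP => i l hil; rewrite mxE (Bpow_tri i).1 //.
    by rewrite vi.
  apply: big1 => i _; rewrite mxE (Bpow_tri i).2 //; exact: (vi _ (ltn_ord i)).
by rewrite !det_mulmx det_tr dY mul1r mulr1.
Qed.


Lemma H0s s : H 0 s = 1.
Proof. exact: det_mx00. Qed.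

Lemma Hb0 b : (b <= r.+1)%N -> H b 0 = 1.
Proof.
move=> hb; rewrite H_lead // expr0.
have -> : lead b 1 = 1%:M.
  apply/matrixP=> i j; rewrite !mxE -!val_eqE /= !inordK //.
    exact: (leq_trans (ltn_ord j)).
  exact: (leq_trans (ltn_ord i)).
exact: det1.
Qed.

Lemma Hb1 b : (b <= r.+1)%N -> H b 1 = 1.
Proof.
move=> hb; rewrite H_lead // expr1.
have -> : lead b Bm = trid (1 : rat) 2%:R b.
  apply/matrixP=> i j; rewrite !mxE /= !inordK //.
    exact: (leq_trans (ltn_ord j)).
  exact: (leq_trans (ltn_ord i)).
exact: det_trid_rat.
Qed.

Lemma detB : \det Bm = 1.
Proof. exact: det_trid_rat. Qed.

Lemma detBpow s : \det (Bm ^+ s) = 1.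
Proof.
elim: s => [|s IH]; first by rewrite expr0 det1.
by rewrite exprS -mulmxE det_mulmx IH detB mulr1.
Qed.

Lemma Hfull s : H r.+1 s = 1.
Proof.
rewrite H_lead //.
have -> : lead r.+1 (Bm ^+ s) = Bm ^+ s by apply/matrixP=> i j; rewrite !mxE !inord_val.
exact: detBpow.
Qed.

Definition Am := \adj Bm.

Lemma BA : Bm *m Am = 1%:M.
Proof. by rewrite mul_mx_adj detB. Qed.

Lemma adjBpow s : \adj (Bm ^+ s) = Am ^+ s.
Proof.
have e : (Bm ^+ s) *m (Am ^+ s) = 1%:M.
  elim: s => [|s IH]; first by rewrite !expr0 mulmx1.
  by rewrite exprSr exprS -!mulmxE mulmxA -(mulmxA _ Bm) BA mulmx1 IH.
rewrite -[\adj _]mulmx1 -e mulmxA mul_adj_mx detBpow mul1mx.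
by [].
Qed.

Lemma H_r s : H r s = (Am ^+ s) ord_max ord_max.
Proof.
rewrite H_lead // -adjBpow mxE /cofactor sign_odd_self mul1r.
congr (\det _); apply/matrixP=> i j; rewrite !mxE.
congr ((Bm ^+ s) _ _); apply/val_inj; rewrite /= inordK ?bumpL // leqW //.
Qed.


Definition Pm : 'M[{poly rat}]_r.+1 := trid (1 - 'X) (2%:R - 'X) r.+1.

Lemma P_eq : Pm = map_mx polyC Bm - 'X%:M.
Proof.
apply/matrixP=> i j; rewrite !mxE /tr -val_eqE /=.
case: eqP => [->|ne].
  by case: eqP => _; rewrite mulr1n ?polyC1 // polyC_natr.
by case: ifP => _; rewrite mulr0n subr0 ?polyC1 ?polyC0.
Qed.

Definition vv k := (chebV r.+1)`_k.
Definition Mc j : 'M[rat]_r.+1 := map_mx (fun p : {poly rat} => p`_j) (\adj Pm).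

Lemma Mrel j : Mc j *m Bm = (vv j)%:M + (if j is j'.+1 then Mc j' else 0).
Proof.
set A := \adj Pm.
have e : A *m (map_mx polyC Bm - 'X%:M) = (chebV r.+1)%:M.
  by rewrite -P_eq mul_adj_mx det_trid_V.
rewrite mulmxBr mul_mx_scalar in e.
apply/matrixP=> i k.
have := congr1 (fun N : 'M[{poly rat}]_r.+1 => (N i k)`_j) e => /=.
rewrite !mxE coefB coef_sum coefXM coefMn => h.
have h2 : \sum_(l < r.+1) (A i l * (map_mx polyC Bm) l k)`_j =
          \sum_(l < r.+1) Mc j i l * Bm l k.
  by apply: eq_bigr => l _; rewrite !mxE coefMC.
rewrite h2 in h.
rewrite -[LHS](subrK (if j == 0%N then 0 else (cofactor Pm k i)`_j.-1)) h.
case: j {h h2} => [|j] /=; first by rewrite !mxE addr0.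
by rewrite !mxE.
Qed.

Lemma S_rel n : \sum_(k < n.+1) vv k *: Am ^+ (n - k) = Mc n *m Bm.
Proof.
elim: n => [|n IH].
  by rewrite big_ord1 subnn expr0 scalemx1 Mrel addr0.
rewrite big_ord_recr /= subnn expr0 scalemx1 Mrel addrC; congr (_ + _).
have -> : \sum_(i < n.+1) vv (widen_ord (leqnSn n.+1) i) *: Am ^+ (n.+1 - widen_ord (leqnSn n.+1) i)
        = (\sum_(k < n.+1) vv k *: Am ^+ (n - k)) *m Am.
  rewrite mulmx_suml; apply: eq_bigr => k _ /=.
  by rewrite subSn ?leq_ord // exprSr -scalemxAl mulmxE.
by rewrite IH -mulmxA BA mulmx1.
Qed.

Lemma cof_P : \det (row' ord_max (col' ord_max Pm)) = chebV r.
Proof.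
rewrite /Pm /trid mat_minor -det_trid_V; congr (\det _).
by apply: mat_eq => i j hi hj; rewrite !bumpL.
Qed.

Lemma final n : \sum_(k < n.+1) vv k * (Am ^+ (n - k)) ord_max ord_max =
                (chebV r.+1 + 'X * chebV r)`_n.
Proof.
have -> : \sum_(k < n.+1) vv k * (Am ^+ (n - k)) ord_max ord_max =
         (\sum_(k < n.+1) vv k *: Am ^+ (n - k)) ord_max ord_max.
  by rewrite summxE; apply: eq_bigr => k _; rewrite mxE.
rewrite S_rel Mrel coefD coefXM; case: n => [|n] /=; rewrite !mxE eqxx mulr1n /vv ?addr0 //.
by rewrite /cofactor sign_odd_self mul1r cof_P.
Qed.

End Bmat.

Ltac nat_lia := repeat match goal with
  | H : is_true (_ <= _)%N |- _ => move/ssrnat.leP: H => H end;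
  try apply/ssrnat.leP; rewrite -?plusE -?minusE; lia.


Lemma H_qsys r n s : H r n s.+2 != 0 ->
  H r n.+2 s * H r n s.+2 = H r n.+1 s.+2 * H r n.+1 s - H r n.+1 s.+1 ^+ 2.
Proof.
move=> nz.
pose F := fun i j : nat => (Bm r ^+ (s + i + j)) ord0 ord0.
have e0 : mat n (fun i j => F i.+1 j.+1) = hk r n s.+2.
  by apply: mat_eq => i j _ _; rewrite /F !addnS !addSn.
have e1 : mat n.+1 (fun i j => F i.+1 j.+1) = hk r n.+1 s.+2.
  by apply: mat_eq => i j _ _; rewrite /F !addnS !addSn.
have e2 : mat n.+1 (fun i j => F i.+1 j) = hk r n.+1 s.+1.
  by apply: mat_eq => i j _ _; rewrite /F !addnS !addSn.
have e3 : mat n.+1 (fun i j => F i j.+1) = hk r n.+1 s.+1.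
  by apply: mat_eq => i j _ _; rewrite /F !addnS !addSn.
have := @DJ _ n F; rewrite e0 e1 e2 e3 => /(_ nz).
by rewrite /H -expr2.
Qed.

Section Main.
Variable r : nat.
Variable R : nat -> int -> rat.
Hypothesis hQ : is_Qsystem_A r R.
Hypothesis hI : forall a : nat, (1 <= a <= r)%N ->
     R a (r - a)%N%:Z = 1 /\ R a ((r - a)%N%:Z + 1) = 1.

Lemma main_ind N : forall a s, (0 < a <= r)%N -> N = (r - a + s)%N ->
  R a N%:Z = H r (r.+1 - a) s /\ 0 < R a N%:Z.
Proof.
elim/ltn_ind: N => N IH a s /andP [a0 ar] hN.
have br : (r.+1 - a <= r.+1)%N by rewrite leq_subr.
case: s hN => [|[|s]] hN.
- have := (hI (a := a)); rewrite a0 ar => /(_ isT) [h _].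
  by rewrite hN addn0 h Hb0.
- have := (hI (a := a)); rewrite a0 ar => /(_ isT) [_ h].
  by rewrite hN addn1 -addn1 PoszD h Hb1.
set M := (r - a + s)%N.
have hNM : N = M.+2 by rewrite hN /M !addnS.
have [hQ0 [hQr hQa]] := hQ.
have haa : (1 <= a <= r)%N by rewrite a0 ar.
have rel := hQa a (M.+1)%:Z haa.
have e1 : (M.+1)%:Z + 1 = N%:Z by rewrite hNM -PoszD addn1.
have e2 : (M.+1)%:Z - 1 = M%:Z by rewrite -addn1 PoszD addrK.
rewrite e1 e2 in rel.
have lt1 : (M.+1 < N)%N by rewrite hNM.
have lt0 : (M < N)%N by rewrite hNM ltnW.
have [IH1 IH1p] := IH M.+1 lt1 a s.+1 haa (esym (addnS _ _)).
have [IH0 IH0p] := IH M lt0 a s haa erefl.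
have [Rp [Rpp [Rpe Rpe2]]] : exists x, 0 < x /\ R a.+1 (M.+1)%:Z = x /\ x = H r (r - a) s.+2.
  have [ear|lar] := eqVneq a r.
    by exists 1; rewrite ear subnn H0s hQr; split; [exact: ltr01 | split].
  have lt : (a < r)%N by rewrite ltn_neqAle lar ar.
  have e : M.+1 = (r - a.+1 + s.+2)%N by rewrite /M; nat_lia.
  have [h hp] := IH M.+1 lt1 a.+1 s.+2 (introT andP (conj (ltn0Sn a) lt)) e.
  by exists (R a.+1 (M.+1)%:Z); split => //; split => //; rewrite h subSS.
have [Rm [Rmp [Rme Rme2]]] : exists x, 0 < x /\ R a.-1 (M.+1)%:Z = x /\ x = H r (r.+1 - a).+1 s.
  have [ea1|la1] := eqVneq a 1%N.
    by exists 1; rewrite ea1 /= hQ0 subn1 /= Hfull; split; [exact: ltr01 | split].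
  have lt2 : (1 < a)%N by rewrite ltn_neqAle eq_sym la1 a0.
  have e : M.+1 = (r - a.-1 + s)%N by rewrite /M; nat_lia.
  have ha : (0 < a.-1 <= r)%N.
    by apply/andP; split; [rewrite -ltnS prednK // | apply: leq_trans (leq_pred a) ar].
  have [h hp] := IH M.+1 lt1 a.-1 s ha e.
  exists (R a.-1 (M.+1)%:Z); split => //; split => //; rewrite h; congr (H r _ s); nat_lia.
have pos : 0 < R a N.
  have : 0 < R a N * R a M.
    by rewrite rel Rpe Rme; apply: addr_gt0; [exact: exprn_gt0 | exact: mulr_gt0].
  by rewrite pmulr_lgt0.
split=> //.
have hb : (r.+1 - a = (r - a).+1)%N by rewrite subSn.
have nz : H r (r - a) s.+2 != 0 by rewrite -Rpe2 lt0r_neq0.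
have dj := H_qsys nz.
rewrite Rpe Rme Rpe2 Rme2 IH1 IH0 hb in rel.
have nz2 : H r (r - a).+1 s != 0 by rewrite -hb -IH0 lt0r_neq0.
apply: (mulIf nz2); rewrite rel hb.
rewrite [H r (r - a) s.+2 * _]mulrC dj addrC subrK.
by [].
Qed.
End Main.

Unset Implicit Arguments.

Theorem mainTheorem16 (r : nat) (R : nat -> int -> rat) :
  (0 < r)%N ->
  is_Qsystem_A r R ->
  (forall a : nat, (1 <= a <= r)%N ->
     R a (r - a)%N%:Z = 1 /\ R a ((r - a)%N%:Z + 1) = 1) ->
  forall n : nat,
    \sum_(k < n.+1) (chebV r.+1)`_k * R 1%N ((n - k)%N%:Z + r%:Z - 1)
    = (chebV r.+1 + 'X * chebV r)`_n.
Proof.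
move=> hr hQ hI n.
rewrite -final; apply: eq_bigr => k _; rewrite /vv; congr (_ * _).
have ha : (0 < 1 <= r)%N by rewrite hr.
have [h _] := main_ind hQ hI ha (erefl (r - 1 + (n - k))%N).
rewrite subSS subn0 H_r in h.
rewrite -h; congr (R 1%N _).
case: r hr {hQ hI ha h} => [|r] // _.
by rewrite subn1 /= -PoszD addnS -addn1 PoszD addrK addnC.
Qed.
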